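(* Let $h>0$, $N\ge1$, $\delta_0\in(0,h/2)$, and let $\tilde A_1,\dots,\tilde A_N$ be nonzero constants. Define $\tilde\theta_i^{+}(x,y)=\tilde A_i\dfrac{\cosh(i(h-y))}{\sinh(ih)}\cos(ix)$ and $\tilde\theta_i^{-}(x,y)=\tilde A_i\dfrac{\cosh(i(h-y))}{\sinh(ih)}\sin(ix)$. Given vectors $f^+=(f_1^+,\dots,f_N^+)$ and $f^-=(f_1^-,\dots,f_N^-)$, there exists a smooth $2\pi$-periodic in $x$ function $\eta_1(x,y)$ with support in $\{(x,y):x\in\mathbb R,\ \delta_0<y<h\}$ such that $\langle\tilde\theta_i^{\pm},\eta_1\rangle=f_i^{\pm}$ for $i=1,\dots,N$.
   Context: $\langle u,v\rangle=\int_0^h\int_0^{2\pi}u(x,y)v(x,y)\,dx\,dy$. *)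

(* Defs.v *)
From Stdlib Require Import Reals.
From Coquelicot Require Import Coquelicot.
Open Scope R_scope.

Definition theta_plus (h : R) (A : nat -> R) (i : nat) (x y : R) : R :=
  A i * (cosh (INR i * (h - y)) / sinh (INR i * h)) * cos (INR i * x).

Definition theta_minus (h : R) (A : nat -> R) (i : nat) (x y : R) : R :=
  A i * (cosh (INR i * (h - y)) / sinh (INR i * h)) * sin (INR i * x).

Definition inner (h : R) (u v : R -> R -> R) : R :=
  RInt (fun y => RInt (fun x => u x y * v x y) 0 (2 * PI)) 0 h.

(* C^infinity on R^2: a family D m n playing the role of d^m_x d^n_y f,
   with D 0 0 = f, every partial derivative of every D m n existing and
   given by the next member, and every D m n jointly continuous. *)
Definition smooth2 (f : R -> R -> R) : Prop :=
  exists D : nat -> nat -> R -> R -> R,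
    D O O = f /\
    (forall m n x y, is_derive (fun t => D m n t y) x (D (S m) n x y)) /\
    (forall m n x y, is_derive (fun t => D m n x t) y (D m (S n) x y)) /\
    (forall m n (p : R * R),
        continuous (fun q : R * R => D m n (fst q) (snd q)) p).

Definition periodic_x (f : R -> R -> R) (T : R) : Prop :=
  forall x y, f (x + T) y = f x y.

Definition in_support (f : R -> R -> R) (x y : R) : Prop :=
  forall eps : R, 0 < eps ->
    exists x' y', Rabs (x - x') < eps /\ Rabs (y - y') < eps /\ f x' y' <> 0.

(* Main.v *)
Require Import Defs.
From Stdlib Require Import Reals Lra Lia.
From Coquelicot Require Import Coquelicot.
Open Scope R_scope.


Fixpoint Cn (n : nat) (f : R -> R) : Prop :=
  match n with O => True | S n => (forall x, ex_derive f x) /\ Cn n (Derive f) end.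

Lemma Cn_ext n : forall f g, (forall x, f x = g x) -> Cn n f -> Cn n g.
Proof.
induction n as [|n IH]; simpl; auto.
intros f g E [H1 H2]; split.
- intros x; apply ex_derive_ext with f; auto.
- apply IH with (Derive f); auto. intros x; apply Derive_ext; auto.
Qed.

Lemma Cn_S n : forall f, Cn (S n) f -> Cn n f.
Proof.
induction n as [|n IH]; simpl; auto.
intros f [H1 [H2 H3]]; split; auto. apply IH; simpl; auto.
Qed.

Lemma Cn_plus n : forall f g, Cn n f -> Cn n g -> Cn n (fun x => f x + g x).
Proof.
induction n as [|n IH]; simpl; auto.
intros f g [F1 F2] [G1 G2]; split.
- intros x; apply (ex_derive_plus f g); auto.
- apply Cn_ext with (fun x => Derive f x + Derive g x).
  + intros x; rewrite Derive_plus; auto.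
  + apply IH; auto.
Qed.

Lemma Cn_scal n : forall k f, Cn n f -> Cn n (fun x => k * f x).
Proof.
induction n as [|n IH]; simpl; auto.
intros k f [F1 F2]; split.
- intros x; apply (ex_derive_scal f); auto.
- apply Cn_ext with (fun x => k * Derive f x).
  + intros x; rewrite Derive_scal; auto.
  + apply IH; auto.
Qed.

Lemma Cn_mult n : forall f g, Cn n f -> Cn n g -> Cn n (fun x => f x * g x).
Proof.
induction n as [|n IH]; simpl; auto.
intros f g [F1 F2] [G1 G2]; split.
- intros x; apply ex_derive_mult; auto.
- apply Cn_ext with (fun x => Derive f x * g x + f x * Derive g x).
  + intros x; rewrite Derive_mult; auto.
  + apply Cn_plus; apply IH; auto.
    * apply (Cn_S n g); simpl; auto.
    * apply (Cn_S n f); simpl; auto.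
Qed.

Lemma Cn_affine n : forall al be f, Cn n f -> Cn n (fun x => f (al * x + be)).
Proof.
induction n as [|n IH]; simpl; auto.
intros al be f [F1 F2]; split.
- intros x. apply (ex_derive_comp f (fun x => al * x + be)); auto.
  auto_derive; auto.
- apply Cn_ext with (fun x => al * Derive f (al * x + be)).
  + intros x. symmetry. apply is_derive_unique.
    apply (is_derive_comp f (fun x => al * x + be)).
    apply Derive_correct; auto.
    auto_derive; auto; ring.
  + apply Cn_scal. apply IH; auto.
Qed.

Lemma Derive_n_S f n x : Derive_n f (S n) x = Derive_n (Derive f) n x.
Proof.
revert x; induction n as [|n IH]; intros x; simpl; auto.
apply Derive_ext. intros t; apply IH.
Qed.

Lemma Cn_Derive_n n : forall f, Cn (S n) f -> forall x, ex_derive (Derive_n f n) x.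
Proof.
induction n as [|n IH]; intros f H x.
- simpl. destruct H as [H _]; auto.
- apply ex_derive_ext with (Derive_n (Derive f) n).
  + intros t; symmetry; apply Derive_n_S.
  + apply IH. destruct H; auto.
Qed.
Definition E (k : nat) (t : R) : R :=
  if Rlt_dec 0 t then exp (- / t) * (/ t) ^ k else 0.

Lemma exp_INR n v : exp (INR n * v) = exp v ^ n.
Proof.
induction n as [|n IH]. simpl. rewrite Rmult_0_l; apply exp_0.
rewrite S_INR, Rmult_plus_distr_r, Rmult_1_l, exp_plus, IH; simpl; ring.
Qed.

Lemma pow_exp_bound n u : 0 < u -> (1 <= n)%nat -> u ^ n <= INR n ^ n * exp u.
Proof.
intros Hu Hn.
assert (Hn' : 0 < INR n) by (apply lt_0_INR; lia).
replace u with (INR n * (u / INR n)) at 1 by (field; lra).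
replace (exp u) with (exp (u / INR n) ^ n).
2:{ rewrite <- exp_INR. f_equal. field; lra. }
rewrite Rpow_mult_distr.
apply Rmult_le_compat_l. apply pow_le; lra.
apply pow_incr. split.
- apply Rlt_le, Rdiv_lt_0_compat; lra.
- assert (H := exp_ineq1 (u / INR n)).
  assert (0 < u / INR n) by (apply Rdiv_lt_0_compat; lra).
  assert (1 + u / INR n < exp (u / INR n)) by (apply H; lra). lra.
Qed.

Lemma E_bound k s : Rabs (E k s) <= INR (k+2) ^ (k+2) * s ^ 2.
Proof.
unfold E. destruct (Rlt_dec 0 s) as [Hs|Hs].
- assert (Hi : 0 < / s) by (apply Rinv_0_lt_compat; lra).
  assert (He : 0 < exp (- / s)) by apply exp_pos.
  rewrite Rabs_pos_eq by (apply Rmult_le_pos; [lra| apply pow_le; lra]).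
  assert (B := pow_exp_bound (k+2) (/ s) Hi ltac:(lia)).
  replace (exp (- / s) * (/ s) ^ k) with (exp (- / s) * (/ s) ^ (k + 2) * s ^ 2).
  2:{ rewrite pow_add. field. lra. }
  apply Rmult_le_compat_r. apply pow2_ge_0.
  replace (INR (k+2) ^ (k+2)) with (exp (- / s) * (INR (k + 2) ^ (k + 2) * exp (/ s))).
  2:{ rewrite (Rmult_comm (INR _ ^ _)), <- Rmult_assoc, <- exp_plus.
      replace (- / s + / s) with 0 by ring. rewrite exp_0; ring. }
  apply Rmult_le_compat_l; lra.
- rewrite Rabs_R0. apply Rmult_le_pos. apply pow_le. apply pos_INR. apply pow2_ge_0.
Qed.

Lemma E_deriv k t : is_derive (E k) t (E (k+2) t - INR k * E (k+1) t).
Proof.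
destruct (Rlt_dec 0 t) as [Ht|Ht].
- apply is_derive_ext_loc with (fun t => exp (- / t) * (/ t) ^ k).
  + assert (Hp : 0 < t) by exact Ht.
    exists (mkposreal t Hp). intros y Hy. simpl in Hy.
    unfold ball in Hy; simpl in Hy; unfold AbsRing_ball, abs, minus, plus, opp in Hy; simpl in Hy.
    unfold E. destruct (Rlt_dec 0 y) as [_|Hy']; auto.
    exfalso. apply Rabs_def2 in Hy. lra.
  + unfold E. destruct (Rlt_dec 0 t) as [_|]; [|lra].
    assert (D1 : is_derive (fun t => exp (- / t)) t (exp (- / t) * (/ t) ^ 2)).
    { auto_derive. lra. field. lra. }
    assert (D2 : is_derive (fun t => (/ t) ^ k) t (- INR k * (/ t) ^ (k + 1))).
    { destruct k as [|k].
      - simpl. auto_derive; auto. ring.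
      - apply is_derive_ext with (fun t => (/ t) ^ S k). auto.
        replace (- INR (S k) * (/ t) ^ (S k + 1)) with (INR (S k) * (- / t ^ 2) * (/ t) ^ Init.Nat.pred (S k)).
        2:{ simpl Init.Nat.pred. replace (S k + 1)%nat with (S (S k)) by lia. simpl. field. lra. }
        apply (is_derive_pow (fun t => / t)). auto_derive. lra. field. lra. }
    assert (D := is_derive_mult _ _ t _ _ D1 D2 Rmult_comm).
    match goal with |- is_derive _ _ ?v => replace v with (plus (mult (exp (- / t) * (/ t) ^ 2) ((/ t) ^ k)) (mult (exp (- / t)) (- INR k * (/ t) ^ (k + 1)))) end.
    + exact D.
    + unfold plus, mult; simpl.
      rewrite !pow_add. simpl. ring.
- destruct (Rle_lt_or_eq_dec t 0 ltac:(lra)) as [Hn|Hz].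
  + apply is_derive_ext_loc with (fun _ => 0).
    * assert (Hp : 0 < - t) by lra.
      exists (mkposreal (-t) Hp). intros y Hy. simpl in Hy.
      unfold ball in Hy; simpl in Hy; unfold AbsRing_ball, abs, minus, plus, opp in Hy; simpl in Hy.
      unfold E. destruct (Rlt_dec 0 y) as [Hy'|]; auto.
      exfalso. apply Rabs_def2 in Hy. lra.
    * unfold E. destruct (Rlt_dec 0 t); [lra|]. replace (0 - INR k * 0) with 0 by ring.
      auto_derive; auto.
  + subst t. unfold E at 2 3. destruct (Rlt_dec 0 0); [lra|].
    replace (0 - INR k * 0) with 0 by ring.
    apply is_derive_Reals. intros eps Heps.
    set (C := INR (k+2) ^ (k+2) + 1).
    assert (HC : 0 < C). { unfold C. assert (0 <= INR (k+2) ^ (k+2)) by (apply pow_le, pos_INR). lra. }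
    assert (Hd : 0 < eps / C) by (apply Rdiv_lt_0_compat; lra).
    exists (mkposreal _ Hd). intros hh Hh0 Hh. simpl in Hh.
    assert (E0 : E k 0 = 0) by (unfold E; destruct (Rlt_dec 0 0); [lra|auto]).
    rewrite Rplus_0_l, E0, Rminus_0_r, Rminus_0_r.
    assert (B := E_bound k hh).
    unfold Rdiv. rewrite Rabs_mult, Rabs_inv.
    assert (Ha : 0 < Rabs hh) by (apply Rabs_pos_lt; auto).
    apply Rmult_lt_reg_r with (Rabs hh); auto.
    rewrite Rmult_assoc, Rinv_l, Rmult_1_r by lra.
    apply Rle_lt_trans with (INR (k + 2) ^ (k + 2) * hh ^ 2); auto.
    replace (hh ^ 2) with (Rabs hh * Rabs hh) by (rewrite <- Rabs_mult; simpl; rewrite Rmult_1_r; apply Rabs_pos_eq; nra).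
    apply Rlt_le_trans with (C * Rabs hh * Rabs hh).
    { assert (0 <= INR (k+2) ^ (k+2)) by (apply pow_le, pos_INR). unfold C. nra. }
    apply Rmult_le_compat_r. lra.
    apply Rmult_le_reg_l with (/ C). apply Rinv_0_lt_compat; lra.
    rewrite <- Rmult_assoc, Rinv_l, Rmult_1_l by lra. unfold Rdiv in Hh. lra.
Qed.

Lemma Cn_E n : forall k, Cn n (E k).
Proof.
induction n as [|n IH]; intros k; simpl; auto. split.
- intros x. eexists. apply E_deriv.
- apply Cn_ext with (fun t => E (k+2) t + (- INR k) * E (k+1) t).
  + intros x. symmetry. rewrite (is_derive_unique _ _ _ (E_deriv k x)). ring.
  + apply Cn_plus; auto. apply Cn_scal; auto.
Qed.

Lemma exR (f : R -> R) a b : (forall x, ex_derive f x) -> ex_RInt f a b.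
Proof. intros H; apply (ex_RInt_continuous f); intros; apply (ex_derive_continuous f); auto. Qed.

Lemma RInt_plusR (f g : R -> R) a b : ex_RInt f a b -> ex_RInt g a b ->
  RInt (fun x => f x + g x) a b = RInt f a b + RInt g a b.
Proof. intros; apply (RInt_plus f g); auto. Qed.

Lemma RInt_scalR (f : R -> R) a b k : ex_RInt f a b ->
  RInt (fun x => k * f x) a b = k * RInt f a b.
Proof. intros; apply (RInt_scal f); auto. Qed.

Lemma RInt_extR (f g : R -> R) a b : (forall x, f x = g x) ->
  RInt f a b = RInt g a b.
Proof. intros H; apply RInt_ext; intros; apply H. Qed.

Lemma ex_plusR (f g : R -> R) a b : ex_RInt f a b -> ex_RInt g a b ->
  ex_RInt (fun x => f x + g x) a b.
Proof. apply (ex_RInt_plus f g). Qed.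

Lemma ex_scalR (f : R -> R) a b k : ex_RInt f a b -> ex_RInt (fun x => k * f x) a b.
Proof. apply (ex_RInt_scal f). Qed.

Definition W r := sin (2 * PI * r) = 0 /\ cos (2 * PI * r) = 1.

Lemma W_INR i : W (INR i).
Proof.
split.
- replace (2 * PI * INR i) with (0 + 2 * INR i * PI) by ring. rewrite sin_period; apply sin_0.
- replace (2 * PI * INR i) with (0 + 2 * INR i * PI) by ring. rewrite cos_period; apply cos_0.
Qed.

Lemma W_plus r s : W r -> W s -> W (r + s).
Proof.
intros [A B] [C D]; split; replace (2 * PI * (r + s)) with (2*PI*r + 2*PI*s) by ring.
rewrite sin_plus, A, B, C, D; ring. rewrite cos_plus, A, B, C, D; ring.
Qed.

Lemma W_minus r s : W r -> W s -> W (r - s).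
Proof.
intros [A B] [C D]; split; replace (2 * PI * (r - s)) with (2*PI*r - 2*PI*s) by ring.
rewrite sin_minus, A, B, C, D; ring. rewrite cos_minus, A, B, C, D; ring.
Qed.

Lemma int_cos r : W r -> RInt (fun x => cos (r * x)) 0 (2 * PI) = if Req_EM_T r 0 then 2 * PI else 0.
Proof.
intros [A B]. destruct (Req_EM_T r 0) as [->|Hr].
- rewrite (RInt_ext _ (fun _ => 1)). rewrite RInt_const. unfold scal; simpl; unfold mult; simpl; ring.
  intros; rewrite Rmult_0_l; apply cos_0.
- rewrite (is_RInt_unique _ 0 (2*PI) (minus (sin (r * (2 * PI)) / r) (sin (r * 0) / r))).
  + unfold minus, plus, opp; simpl. rewrite Rmult_0_r, sin_0.
    replace (r * (2 * PI)) with (2 * PI * r) by ring. rewrite A. field; auto.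
  + apply (is_RInt_derive (fun x => sin (r * x) / r)).
    * intros x _. auto_derive; auto. field; auto.
    * intros x _. apply (ex_derive_continuous (fun x => cos (r * x))). auto_derive; auto.
Qed.

Lemma int_sin r : W r -> RInt (fun x => sin (r * x)) 0 (2 * PI) = 0.
Proof.
intros [A B]. destruct (Req_EM_T r 0) as [->|Hr].
- rewrite (RInt_ext _ (fun _ => 0)). rewrite RInt_const. unfold scal; simpl; unfold mult; simpl; ring.
  intros; rewrite Rmult_0_l; apply sin_0.
- rewrite (is_RInt_unique _ 0 (2*PI) (minus (- cos (r * (2 * PI)) / r) (- cos (r * 0) / r))).
  + unfold minus, plus, opp; simpl. rewrite Rmult_0_r, cos_0.
    replace (r * (2 * PI)) with (2 * PI * r) by ring. rewrite B. field; auto.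
  + apply (is_RInt_derive (fun x => - cos (r * x) / r)).
    * intros x _. auto_derive; auto. field; auto.
    * intros x _. apply (ex_derive_continuous (fun x => sin (r * x))). auto_derive; auto.
Qed.

Lemma exc r a b : ex_RInt (fun x => cos (r * x)) a b.
Proof. apply exR; intros; auto_derive; auto. Qed.
Lemma exs r a b : ex_RInt (fun x => sin (r * x)) a b.
Proof. apply exR; intros; auto_derive; auto. Qed.

Lemma INR_diff0 i j : INR i - INR j = 0 -> i = j.
Proof. intros H; apply INR_eq; lra. Qed.

Lemma int_cc i j : (1 <= i)%nat -> (1 <= j)%nat ->
  RInt (fun x => cos (INR i * x) * cos (INR j * x)) 0 (2 * PI) = if Nat.eq_dec i j then PI else 0.
Proof.
intros Hi Hj.
rewrite (RInt_extR _ (fun x => /2 * (cos ((INR i - INR j) * x) + cos ((INR i + INR j) * x)))).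
2:{ intros x. replace ((INR i - INR j) * x) with (INR i * x - INR j * x) by ring.
    replace ((INR i + INR j) * x) with (INR i * x + INR j * x) by ring.
    rewrite cos_minus, cos_plus. field. }
rewrite RInt_scalR by (apply ex_plusR; apply exc).
rewrite RInt_plusR by apply exc.
rewrite !int_cos by (first [apply W_minus | apply W_plus]; apply W_INR).
destruct (Req_EM_T (INR i - INR j) 0) as [H1|H1];
destruct (Req_EM_T (INR i + INR j) 0) as [H2|H2];
destruct (Nat.eq_dec i j) as [H3|H3].
all: try (apply le_INR in Hi; apply le_INR in Hj; simpl in Hi, Hj; lra).
- apply INR_diff0 in H1; tauto.
- subst; lra.
Qed.

Lemma int_ss i j : (1 <= i)%nat -> (1 <= j)%nat ->
  RInt (fun x => sin (INR i * x) * sin (INR j * x)) 0 (2 * PI) = if Nat.eq_dec i j then PI else 0.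
Proof.
intros Hi Hj.
rewrite (RInt_extR _ (fun x => /2 * (cos ((INR i - INR j) * x) + (-1) * cos ((INR i + INR j) * x)))).
2:{ intros x. replace ((INR i - INR j) * x) with (INR i * x - INR j * x) by ring.
    replace ((INR i + INR j) * x) with (INR i * x + INR j * x) by ring.
    rewrite cos_minus, cos_plus. field. }
rewrite RInt_scalR by (apply ex_plusR; [apply exc| apply ex_scalR; apply exc]).
rewrite RInt_plusR; [| apply exc | apply ex_scalR; apply exc].
rewrite RInt_scalR by apply exc.
rewrite !int_cos by (first [apply W_minus | apply W_plus]; apply W_INR).
destruct (Req_EM_T (INR i - INR j) 0) as [H1|H1];
destruct (Req_EM_T (INR i + INR j) 0) as [H2|H2];
destruct (Nat.eq_dec i j) as [H3|H3].
all: try (apply le_INR in Hi; apply le_INR in Hj; simpl in Hi, Hj; lra).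
- apply INR_diff0 in H1; tauto.
- subst; lra.
Qed.

Lemma int_cs i j :
  RInt (fun x => cos (INR i * x) * sin (INR j * x)) 0 (2 * PI) = 0.
Proof.
rewrite (RInt_extR _ (fun x => /2 * (sin ((INR i + INR j) * x) + (-1) * sin ((INR i - INR j) * x)))).
2:{ intros x. replace ((INR i - INR j) * x) with (INR i * x - INR j * x) by ring.
    replace ((INR i + INR j) * x) with (INR i * x + INR j * x) by ring.
    rewrite sin_minus, sin_plus. field. }
rewrite RInt_scalR by (apply ex_plusR; [apply exs| apply ex_scalR; apply exs]).
rewrite RInt_plusR; [| apply exs | apply ex_scalR; apply exs].
rewrite RInt_scalR by apply exs.
rewrite !int_sin by (first [apply W_minus | apply W_plus]; apply W_INR).
lra.
Qed.

Lemma int_sc i j :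
  RInt (fun x => sin (INR i * x) * cos (INR j * x)) 0 (2 * PI) = 0.
Proof.
rewrite (RInt_extR _ (fun x => cos (INR j * x) * sin (INR i * x))).
apply int_cs. intros; ring.
Qed.

Fixpoint Tm (a c : nat -> R) (m n : nat) (x : R) : R :=
  match n with
  | O => 0
  | S n' => Tm a c m n' x + INR (S n') ^ m * (a (S n') * cos (INR (S n') * x + INR m * (PI / 2))
                                           + c (S n') * sin (INR (S n') * x + INR m * (PI / 2)))
  end.

Lemma Tm_deriv a c m n x : is_derive (Tm a c m n) x (Tm a c (S m) n x).
Proof.
induction n as [|n IH]; cbn [Tm].
- auto_derive; auto.
- apply (is_derive_plus (Tm a c m n)); auto.
  set (j := INR (S n)). set (ph := INR m * (PI / 2)).
  replace (INR (S m) * (PI / 2)) with (ph + PI / 2) by (unfold ph; rewrite S_INR; ring).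
  replace (j * x + (ph + PI / 2)) with ((j * x + ph) + PI / 2) by ring.
  rewrite (cos_plus (j * x + ph) (PI / 2)), (sin_plus (j * x + ph) (PI / 2)), cos_PI2, sin_PI2.
  auto_derive; auto. simpl. ring.
Qed.

Lemma Tm0_S a c n x : Tm a c 0 (S n) x =
  Tm a c 0 n x + (a (S n) * cos (INR (S n) * x) + c (S n) * sin (INR (S n) * x)).
Proof. cbn [Tm]. rewrite Rmult_0_l, !Rplus_0_r. simpl pow. ring. Qed.

Lemma Tm_ex a c m n x : ex_derive (Tm a c m n) x.
Proof. eexists; apply Tm_deriv. Qed.

Lemma Tm_period a c m n x : Tm a c m n (x + 2 * PI) = Tm a c m n x.
Proof.
induction n as [|n IH]; cbn [Tm]; auto.
rewrite IH.
replace (INR (S n) * (x + 2 * PI) + INR m * (PI / 2)) with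
  ((INR (S n) * x + INR m * (PI / 2)) + 2 * INR (S n) * PI) by ring.
rewrite cos_period, sin_period; auto.
Qed.

Lemma int_cT a c i n : (1 <= i)%nat ->
  RInt (fun x => cos (INR i * x) * Tm a c 0 n x) 0 (2 * PI) =
  if (i <=? n)%nat then PI * a i else 0.
Proof.
intros Hi. induction n as [|n IH].
- rewrite (RInt_extR _ (fun _ => 0)). rewrite RInt_const.
  destruct (i <=? 0)%nat eqn:E; [apply Nat.leb_le in E; lia|].
  unfold scal; simpl; unfold mult; simpl; ring.
  intros; simpl; ring.
- rewrite (RInt_extR _ (fun x => cos (INR i * x) * Tm a c 0 n x +
     (a (S n) * (cos (INR i * x) * cos (INR (S n) * x)) + c (S n) * (cos (INR i * x) * sin (INR (S n) * x))))).
  2:{ intros x; rewrite Tm0_S; ring. }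
  assert (X1 : ex_RInt (fun x => cos (INR i * x) * Tm a c 0 n x) 0 (2 * PI)).
  { apply exR; intros; apply (ex_derive_mult (fun x => cos (INR i * x))). auto_derive; auto. apply Tm_ex. }
  assert (X2 : ex_RInt (fun x => cos (INR i * x) * cos (INR (S n) * x)) 0 (2 * PI)).
  { apply exR; intros; auto_derive; auto. }
  assert (X3 : ex_RInt (fun x => cos (INR i * x) * sin (INR (S n) * x)) 0 (2 * PI)).
  { apply exR; intros; auto_derive; auto. }
  rewrite RInt_plusR; [| exact X1 | apply ex_plusR; apply ex_scalR; assumption].
  rewrite RInt_plusR; [| apply ex_scalR; assumption | apply ex_scalR; assumption].
  rewrite !RInt_scalR by assumption.
  rewrite IH, int_cc, int_cs by lia.
  destruct (Nat.eq_dec i (S n)) as [He|He].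
  + subst i. rewrite Nat.leb_refl.
    destruct (S n <=? n)%nat eqn:E; [apply Nat.leb_le in E; lia|]. lra.
  + destruct (i <=? n)%nat eqn:E1; destruct (i <=? S n)%nat eqn:E2;
    try apply Nat.leb_le in E1; try apply Nat.leb_le in E2;
    try apply Nat.leb_gt in E1; try apply Nat.leb_gt in E2; try lia; lra.
Qed.

Lemma int_sT a c i n : (1 <= i)%nat ->
  RInt (fun x => sin (INR i * x) * Tm a c 0 n x) 0 (2 * PI) =
  if (i <=? n)%nat then PI * c i else 0.
Proof.
intros Hi. induction n as [|n IH].
- rewrite (RInt_extR _ (fun _ => 0)). rewrite RInt_const.
  destruct (i <=? 0)%nat eqn:E; [apply Nat.leb_le in E; lia|].
  unfold scal; simpl; unfold mult; simpl; ring.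
  intros; simpl; ring.
- rewrite (RInt_extR _ (fun x => sin (INR i * x) * Tm a c 0 n x +
     (a (S n) * (sin (INR i * x) * cos (INR (S n) * x)) + c (S n) * (sin (INR i * x) * sin (INR (S n) * x))))).
  2:{ intros x; rewrite Tm0_S; ring. }
  assert (X1 : ex_RInt (fun x => sin (INR i * x) * Tm a c 0 n x) 0 (2 * PI)).
  { apply exR; intros; apply (ex_derive_mult (fun x => sin (INR i * x))). auto_derive; auto. apply Tm_ex. }
  assert (X2 : ex_RInt (fun x => sin (INR i * x) * cos (INR (S n) * x)) 0 (2 * PI)).
  { apply exR; intros; auto_derive; auto. }
  assert (X3 : ex_RInt (fun x => sin (INR i * x) * sin (INR (S n) * x)) 0 (2 * PI)).
  { apply exR; intros; auto_derive; auto. }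
  rewrite RInt_plusR; [| exact X1 | apply ex_plusR; apply ex_scalR; assumption].
  rewrite RInt_plusR; [| apply ex_scalR; assumption | apply ex_scalR; assumption].
  rewrite !RInt_scalR by assumption.
  rewrite IH, int_ss, int_sc by lia.
  destruct (Nat.eq_dec i (S n)) as [He|He].
  + subst i. rewrite Nat.leb_refl.
    destruct (S n <=? n)%nat eqn:E; [apply Nat.leb_le in E; lia|]. lra.
  + destruct (i <=? n)%nat eqn:E1; destruct (i <=? S n)%nat eqn:E2;
    try apply Nat.leb_le in E1; try apply Nat.leb_le in E2;
    try apply Nat.leb_gt in E1; try apply Nat.leb_gt in E2; try lia; lra.
Qed.

Lemma der_mult_r (f : R -> R) x l k : is_derive f x l -> is_derive (fun t => f t * k) x (l * k).
Proof.
intros H. apply is_derive_ext with (fun t => k * f t). intros; apply Rmult_comm.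
rewrite Rmult_comm. apply (is_derive_scal f); auto.
Qed.

Lemma der_mult_l (f : R -> R) x l k : is_derive f x l -> is_derive (fun t => k * f t) x (k * l).
Proof. intros H. apply (is_derive_scal f); auto. Qed.

Lemma fam_of_Cn (b : R -> R) : (forall n, Cn n b) ->
  forall n y, is_derive (Derive_n b n) y (Derive_n b (S n) y).
Proof.
intros H n y. simpl. apply Derive_correct. apply Cn_Derive_n. apply H.
Qed.

Lemma E_pos k t : 0 < t -> 0 < E k t.
Proof.
intros Ht; unfold E; destruct (Rlt_dec 0 t); [|lra].
apply Rmult_lt_0_compat. apply exp_pos. apply pow_lt. apply Rinv_0_lt_compat; lra.
Qed.

Lemma E_nonneg k t : 0 <= E k t.
Proof.
unfold E; destruct (Rlt_dec 0 t); [|lra].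
apply Rmult_le_pos. apply Rlt_le, exp_pos. apply pow_le. apply Rlt_le, Rinv_0_lt_compat; lra.
Qed.

Lemma E_zero k t : t <= 0 -> E k t = 0.
Proof. intros; unfold E; destruct (Rlt_dec 0 t); [lra|auto]. Qed.

Lemma sinh_pos x : 0 < x -> 0 < sinh x.
Proof.
intros Hx; unfold sinh. assert (exp (- x) < exp x) by (apply exp_increasing; lra). lra.
Qed.

Lemma cosh_pos x : 0 < cosh x.
Proof.
unfold cosh. assert (0 < exp x) by apply exp_pos. assert (0 < exp (- x)) by apply exp_pos. lra.
Qed.

Theorem lemma9p2 (h : R) (N : nat) (delta0 : R) (A : nat -> R)
  (fp fm : nat -> R) :
  0 < h -> (1 <= N)%nat -> 0 < delta0 < h / 2 ->
  (forall i, (1 <= i <= N)%nat -> A i <> 0) ->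
  exists eta1 : R -> R -> R,
    smooth2 eta1 /\ periodic_x eta1 (2 * PI) /\
    (forall x y, in_support eta1 x y -> delta0 < y < h) /\
    (forall i, (1 <= i <= N)%nat ->
       inner h (theta_plus h A i) eta1 = fp i /\
       inner h (theta_minus h A i) eta1 = fm i).
Proof.
intros Hh HN Hd HA.
set (a0 := delta0 + (h - delta0) / 3).
set (c0 := delta0 + 2 * (h - delta0) / 3).
set (b := fun y => E 0 (1 * y + - a0) * E 0 (-1 * y + c0)).
assert (Cb : forall n, Cn n b).
{ intros n. apply Cn_mult; apply Cn_affine; apply Cn_E. }
assert (Fb := fam_of_Cn b Cb).
assert (exb : forall y, ex_derive b y).
{ intros y. exists (Derive_n b 1 y). apply (Fb 0%nat). }
set (K := fun (i : nat) (y : R) => cosh (INR i * (h - y)) / sinh (INR i * h)).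
set (Mp := fun i => RInt (fun y => K i y * b y) 0 h).
assert (exK : forall i y, (1 <= i)%nat -> ex_derive (K i) y).
{ intros i y Hi. unfold K.
  assert (0 < sinh (INR i * h)).
  { apply sinh_pos. apply Rmult_lt_0_compat; auto. apply lt_0_INR; lia. }
  unfold cosh, sinh in *. auto_derive. lra. }
assert (exKb : forall i, (1 <= i)%nat -> forall u v, ex_RInt (fun y => K i y * b y) u v).
{ intros i Hi u v. apply exR. intros y. apply ex_derive_mult; auto. }
assert (bpos : forall y, a0 < y < c0 -> 0 < b y).
{ intros y Hy. unfold b. apply Rmult_lt_0_compat; apply E_pos; lra. }
assert (bnn : forall y, 0 <= b y).
{ intros y. unfold b. apply Rmult_le_pos; apply E_nonneg. }
assert (Kpos : forall i y, (1 <= i)%nat -> 0 < K i y).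
{ intros i y Hi. unfold K. apply Rdiv_lt_0_compat. apply cosh_pos.
  apply sinh_pos. apply Rmult_lt_0_compat; auto. apply lt_0_INR; lia. }
assert (Mpos : forall i, (1 <= i)%nat -> 0 < Mp i).
{ intros i Hi. unfold Mp.
  rewrite <- (RInt_Chasles _ 0 a0 h) by apply exKb, Hi.
  rewrite <- (RInt_Chasles _ a0 c0 h) by apply exKb, Hi.
  assert (0 <= RInt (fun y => K i y * b y) 0 a0).
  { apply RInt_ge_0. unfold a0; lra. apply exKb, Hi.
    intros; apply Rmult_le_pos; auto. apply Rlt_le; auto. }
  assert (0 <= RInt (fun y => K i y * b y) c0 h).
  { apply RInt_ge_0. unfold c0; lra. apply exKb, Hi.
    intros; apply Rmult_le_pos; auto. apply Rlt_le; auto. }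
  assert (0 < RInt (fun y => K i y * b y) a0 c0).
  { apply RInt_gt_0. unfold a0, c0; lra.
    intros; apply Rmult_lt_0_compat; auto.
    intros y _. apply (ex_derive_continuous (fun y => K i y * b y)).
    apply ex_derive_mult; auto. }
  unfold plus; simpl. lra. }
set (ac := fun i => fp i / (A i * PI * Mp i)).
set (cc := fun i => fm i / (A i * PI * Mp i)).
exists (fun x y => Tm ac cc 0 N x * b y).
split; [|split; [|split]].
-
  exists (fun m n x y => Tm ac cc m N x * Derive_n b n y).
  split; [reflexivity|]. split; [|split].
  + intros m n x y. apply der_mult_r. apply Tm_deriv.
  + intros m n x y. apply der_mult_l. apply Fb.
  + intros m n [px py].
    apply (continuous_mult (fun q : R * R => Tm ac cc m N (fst q)) (fun q : R * R => Derive_n b n (snd q))).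
    * apply (continuous_comp fst (Tm ac cc m N)). apply continuous_fst.
      apply (ex_derive_continuous (Tm ac cc m N)). apply Tm_ex.
    * apply (continuous_comp snd (Derive_n b n)). apply continuous_snd.
      apply (ex_derive_continuous (Derive_n b n)). eexists. apply Fb.
- intros x y. rewrite Tm_period. reflexivity.
- intros x y Hs.
  assert (He : 0 < (h - delta0) / 3) by lra.
  destruct (Hs _ He) as [x' [y' [_ [Hy Hnz]]]].
  assert (a0 < y' < c0).
  { split.
    - destruct (Rlt_le_dec a0 y') as [|Hle]; auto. exfalso. apply Hnz.
      unfold b. rewrite (E_zero 0 (1 * y' + - a0)) by lra. ring.
    - destruct (Rlt_le_dec y' c0) as [|Hle]; auto. exfalso. apply Hnz.
      unfold b. rewrite (E_zero 0 (-1 * y' + c0)) by lra. ring. }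
  apply Rabs_def2 in Hy. unfold a0, c0 in *. lra.
- intros i Hi.
  assert (Hi1 : (1 <= i)%nat) by lia.
  assert (HiN : (i <=? N)%nat = true) by (apply Nat.leb_le; lia).
  assert (HAi := HA i Hi).
  assert (HM := Mpos i Hi1).
  split.
  + unfold inner.
    rewrite (RInt_extR _ (fun y => (A i * PI * ac i) * (K i y * b y))).
    2:{ intros y.
        rewrite (RInt_extR _ (fun x => (A i * K i y * b y) * (cos (INR i * x) * Tm ac cc 0 N x))).
        2:{ intros x. unfold theta_plus, K. ring. }
        rewrite RInt_scalR.
        2:{ apply exR; intros x. apply (ex_derive_mult (fun x => cos (INR i * x))).
            auto_derive; auto. apply Tm_ex. }
        rewrite int_cT, HiN by auto. ring. }
    rewrite RInt_scalR by auto. fold (Mp i). unfold ac.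
    field. split; [lra|]. split; auto. apply PI_neq0.
  + unfold inner.
    rewrite (RInt_extR _ (fun y => (A i * PI * cc i) * (K i y * b y))).
    2:{ intros y.
        rewrite (RInt_extR _ (fun x => (A i * K i y * b y) * (sin (INR i * x) * Tm ac cc 0 N x))).
        2:{ intros x. unfold theta_minus, K. ring. }
        rewrite RInt_scalR.
        2:{ apply exR; intros x. apply (ex_derive_mult (fun x => sin (INR i * x))).
            auto_derive; auto. apply Tm_ex. }
        rewrite int_sT, HiN by auto. ring. }
    rewrite RInt_scalR by auto. fold (Mp i). unfold cc.
    field. split; [lra|]. split; auto. apply PI_neq0.
Qed.
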